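(* Let $L$ be the line graph of the Petersen graph ($15$ vertices). Coloring each pair of distinct vertices of $L$ by $b$, $a$, $c$ according as their distance in $L$ is $1$, $2$, $3$ gives a representation of the relation algebra $31_{65}$, and this representation is minimal: no representation of $31_{65}$ has fewer than $15$ vertices.
   Context: A cycle type is the multiset of colors of the sides of a triangle, e.g. $caa$ = one side $c$, two sides $a$. $31_{65}$ is the finite symmetric integral relation algebra with atoms $1',a,b,c$ whose mandatory diversity cycle types are exactly $aaa, bbb, ccc, abb, baa, caa, abc$ (so $acc, bcc, cbb$ are forbidden). A representation on a set $X$ (its vertices) is a coloring of all 2-element subsets of $X$ by $a,b,c$, each color used, such that: for every mandatory type $\{h,i,j\}$, every edge $\{x,y\}$ colored $h$ (for each choice of $h$ among the type's colors) and each ordering $(i,j)$ of the remaining two colors, some $z$ has $\{x,z\}$ colored $i$, $\{z,y\}$ colored $j$; and no triangle of a forbidden type occurs. *)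

(* Defs.v *)
From HB Require Import structures.
From mathcomp Require Import all_boot.
Set Implicit Arguments. Unset Strict Implicit. Unset Printing Implicit Defensive.

(** The three diversity atoms a, b, c of 31_65. *)
Inductive color := ca | cb | cc.

Definition color_to (k : color) : 'I_3 :=
  match k with ca => inord 0 | cb => inord 1 | cc => inord 2 end.
Definition color_of (i : 'I_3) : color :=
  match val i with 0 => ca | 1 => cb | _ => cc end.
Lemma color_toK : cancel color_to color_of.
Proof. by case; rewrite /color_of /color_to /= inordK. Qed.
HB.instance Definition _ := Finite.copy color (can_type color_toK).

(** Cycle types are multisets of three colors, represented as 3-element lists
    up to permutation. *)
Definition mandatory_types : seq (seq color) :=
  [:: [:: ca; ca; ca]; [:: cb; cb; cb]; [:: cc; cc; cc];
      [:: ca; cb; cb]; [:: cb; ca; ca]; [:: cc; ca; ca]; [:: ca; cb; cc]].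
Definition forbidden_types : seq (seq color) :=
  [:: [:: ca; cc; cc]; [:: cb; cc; cc]; [:: cc; cb; cb]].

Definition mandatory (h i j : color) : bool :=
  has (perm_eq [:: h; i; j]) mandatory_types.
Definition forbidden (h i j : color) : bool :=
  has (perm_eq [:: h; i; j]) forbidden_types.

(** A coloring of the 2-element subsets of X is given as a function
    col : X -> X -> color that is symmetric on distinct pairs
    (its values on the diagonal are irrelevant). *)
Definition representation (X : finType) (col : X -> X -> color) : Prop :=
  [/\ (forall x y, x != y -> col x y = col y x),
      (forall k, exists x y, x != y /\ col x y = k),
      (forall h i j, mandatory h i j ->
         forall x y, x != y -> col x y = h ->
           exists z, [/\ z != x, z != y, col x z = i & col z y = j]) &
      (forall x y z, x != y -> y != z -> x != z ->
         ~~ forbidden (col x y) (col y z) (col x z))].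

(** Petersen graph: vertices are the 2-subsets of {0,..,4}, adjacent iff
    disjoint.  Its edges are the sets {u, v} of two adjacent vertices. *)
Definition pet_vertex (u : {set 'I_5}) : bool := #|u| == 2.
Definition pet_edge (E : {set {set 'I_5}}) : bool :=
  [exists u, exists v,
     [&& pet_vertex u, pet_vertex v, [disjoint u & v] & E == [set u; v]]].

Notation LV := ({E : {set {set 'I_5}} | pet_edge E}).
Definition adjL (e f : LV) : bool :=
  (e != f) && (val e :&: val f != set0).

Fixpoint reachL (k : nat) (x y : LV) : bool :=
  match k with
  | 0 => x == y
  | k'.+1 => reachL k' x y || [exists z, reachL k' x z && adjL z y]
  end.
Definition distL (k : nat) (x y : LV) : bool :=
  reachL k x y && ~~ reachL k.-1 x y.

(** Color by distance: 1 -> b, 2 -> a, 3 -> c (the fallback branch is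
    unreachable for distinct vertices, as asserted in the theorem). *)
Definition colL (x y : LV) : color :=
  if distL 1 x y then cb else if distL 2 x y then ca else cc.

(* Main.v *)
Require Import Defs.
From mathcomp Require Import all_boot.
Set Implicit Arguments. Unset Strict Implicit. Unset Printing Implicit Defensive.

Definition quad := (nat * nat * nat * nat)%type.
Definition Q : seq quad := [:: (1,2,3,4); (1,3,2,4); (1,4,2,3); (0,2,3,4); (0,3,2,4); (0,4,2,3); (0,1,3,4); (0,3,1,4); (0,4,1,3); (0,1,2,4); (0,2,1,4); (0,4,1,2); (0,1,2,3); (0,2,1,3); (0,3,1,2)].
Definition q0 : quad := (0,1,2,3).
Definition qa (q : quad) := q.1.1.1.
Definition qb (q : quad) := q.1.1.2.
Definition qc (q : quad) := q.1.2.
Definition qd (q : quad) := q.2.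
Definition eqP2N (a b c d : nat) := ((a == c) && (b == d)) || ((a == d) && (b == c)).
Definition eqESN (q r : quad) :=
  (eqP2N (qa q) (qb q) (qa r) (qb r) && eqP2N (qc q) (qd q) (qc r) (qd r)) ||
  (eqP2N (qa q) (qb q) (qc r) (qd r) && eqP2N (qc q) (qd q) (qa r) (qb r)).
Definition shareN (q r : quad) :=
  [|| eqP2N (qa q) (qb q) (qa r) (qb r), eqP2N (qa q) (qb q) (qc r) (qd r),
      eqP2N (qc q) (qd q) (qa r) (qb r) | eqP2N (qc q) (qd q) (qc r) (qd r)].
Definition QN n := nth q0 Q n.
Definition adjN n m := ~~ eqESN (QN n) (QN m) && shareN (QN n) (QN m).
Definition I15 := iota 0 15.
Fixpoint reachN (k : nat) (x y : nat) : bool :=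
  match k with
  | 0 => x == y
  | k'.+1 => reachN k' x y || has (fun z => reachN k' x z && adjN z y) I15
  end.
Definition distN k x y := reachN k x y && ~~ reachN k.-1 x y.
Definition colN x y := if distN 1 x y then cb else if distN 2 x y then ca else cc.
Definition colTab := Eval vm_compute in [seq [seq colN x y | y <- I15] | x <- I15].
Definition colM x y := nth cc (nth [::] colTab x) y.
Definition code (k : color) : nat := match k with ca => 0 | cb => 1 | cc => 2 end.
Definition ceq (k l : color) := code k == code l.
Lemma colM_ok : all (fun x => all (fun y => ceq (colN x y) (colM x y)) I15) I15.
Proof. vm_compute. reflexivity. Qed.
Definition mandN (h i j : color) : bool :=
  has (perm_eq (map code [:: h; i; j])) (map (map code) mandatory_types).
Definition forbN (h i j : color) : bool :=
  has (perm_eq (map code [:: h; i; j])) (map (map code) forbidden_types).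
Definition cols := [:: ca; cb; cc].
Definition repN (N : nat) (col : nat -> nat -> color) : bool :=
  [&& all (fun x => all (fun y => (x != y) ==> ceq (col x y) (col y x)) (iota 0 N)) (iota 0 N),
      all (fun k => has (fun x => has (fun y => (x != y) && ceq (col x y) k) (iota 0 N)) (iota 0 N)) cols,
      all (fun h => all (fun i => all (fun j => mandN h i j ==>
         all (fun x => all (fun y => ((x != y) && ceq (col x y) h) ==>
            has (fun z => [&& z != x, z != y, ceq (col x z) i & ceq (col z y) j]) (iota 0 N)) (iota 0 N)) (iota 0 N)) cols) cols) cols &
      all (fun x => all (fun y => all (fun z => [&& x != y, y != z & x != z] ==>
         ~~ forbN (col x y) (col y z) (col x z)) (iota 0 N)) (iota 0 N)) (iota 0 N)].
Lemma repM : repN 15 colM.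
Proof. vm_compute. reflexivity. Qed.
Lemma distM : all (fun x => all (fun y => (x != y) ==> [|| distN 1 x y, distN 2 x y | distN 3 x y]) I15) I15.
Proof. vm_compute. reflexivity. Qed.

Lemma code_inj : injective code.
Proof. by move=> x y; case: x; case: y. Qed.
Lemma ceqE k l : ceq k l = (k == l).
Proof. by rewrite /ceq; apply/eqP/eqP => [/code_inj|->]. Qed.
Lemma perm_code s t : perm_eq (map code s) (map code t) = perm_eq s t.
Proof. by apply/idP/idP; [apply: perm_map_inj; apply: code_inj | apply: perm_map]. Qed.
Lemma mandE h i j : mandatory h i j = mandN h i j.
Proof. by rewrite /mandN has_map; apply: eq_has => t /=; rewrite -perm_code. Qed.
Lemma forbE h i j : forbidden h i j = forbN h i j.
Proof. by rewrite /forbN has_map; apply: eq_has => t /=; rewrite -perm_code. Qed.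

Lemma inI n N : n < N -> n \in iota 0 N.
Proof. by rewrite mem_iota. Qed.
Lemma inI' n N : n \in iota 0 N -> n < N.
Proof. by rewrite mem_iota. Qed.
Lemma in_cols k : k \in cols.
Proof. by case: k; rewrite /cols !in_cons eqxx ?orbT. Qed.

Lemma transfer (X : finType) (col : X -> X -> color) (f : nat -> X) N colM' :
  (forall x, exists2 n, n < N & f n = x) ->
  (forall n m, n < N -> m < N -> (f n == f m) = (n == m)) ->
  (forall n m, n < N -> m < N -> col (f n) (f m) = colM' n m) ->
  repN N colM' -> representation col.
Proof.
move=> fs fi fc; rewrite /repN => /and4P[H1 H2 H3 H4]; split.
- move=> x y; case: (fs x) => n nN <-; case: (fs y) => m mN <-.
  rewrite fi // => nm; rewrite !fc //; apply/eqP; rewrite -ceqE.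
  by move: H1 => /allP/(_ n (inI nN))/allP/(_ m (inI mN)); rewrite nm.
- move=> k; move: H2 => /allP/(_ k (in_cols k)) /hasP[n /inI' nN /hasP[m /inI' mN /andP[nm ck]]].
  exists (f n), (f m); rewrite fi // fc //; split => //; apply/eqP; by rewrite -ceqE.
- move=> h i j; rewrite mandE => hm x y; case: (fs x) => n nN <-; case: (fs y) => m mN <-.
  rewrite fi // fc // => nm cnm.
  move: H3 => /allP/(_ h (in_cols h))/allP/(_ i (in_cols i))/allP/(_ j (in_cols j)).
  rewrite hm /= => /allP/(_ n (inI nN))/allP/(_ m (inI mN)).
  rewrite nm cnm /= ceqE eqxx => /hasP[p /inI' pN /and4P[pn pm c1 c2]].
  exists (f p); rewrite !fi // !fc //; split => //; apply/eqP; rewrite -ceqE //.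
- move=> x y z; case: (fs x) => n nN <-; case: (fs y) => m mN <-; case: (fs z) => p pN <-.
  rewrite !fi // !fc // forbE => nm mp np.
  move: H4 => /allP/(_ n (inI nN))/allP/(_ m (inI mN))/allP/(_ p (inI pN)).
  by rewrite nm mp np.
Qed.

Lemma eq2 (T : finType) (a b c d : T) : a != b -> c != d ->
  ([set a; b] == [set c; d]) = ((a == c) && (b == d)) || ((a == d) && (b == c)).
Proof.
move=> ab cd; apply/eqP/idP.
- move=> E.
  have ha : a \in [set c; d] by rewrite -E !inE eqxx.
  have hb : b \in [set c; d] by rewrite -E !inE eqxx orbT.
  move: ha hb ab; rewrite !inE => /orP[]/eqP-> /orP[]/eqP->; rewrite ?eqxx ?orbT //.
- by case/orP=> /andP[/eqP-> /eqP->] //; apply: setUC.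
Qed.

Lemma meet2 (T : finType) (a b c d : T) :
  ([set a; b] :&: [set c; d] != set0) = [|| a == c, a == d, b == c | b == d].
Proof.
apply/set0Pn/idP => [[x]|].
- by rewrite !inE => /andP[/orP[]/eqP-> /orP[]/eqP->]; rewrite eqxx ?orbT.
- by case/or4P=> /eqP->; [exists c | exists d | exists c | exists d]; rewrite !inE !eqxx ?orbT.
Qed.

Lemma inord_eq a b : a < 5 -> b < 5 -> ((inord a : 'I_5) == inord b) = (a == b).
Proof.
move=> ha hb; apply/eqP/eqP => [/(congr1 (@nat_of_ord 5))|->//].
by rewrite !inordK.
Qed.

Definition P2 (a b : nat) : {set 'I_5} := [set inord a; inord b].
Definition ES (q : quad) : {set {set 'I_5}} := [set P2 (qa q) (qb q); P2 (qc q) (qd q)].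
Definition validq (q : quad) : bool :=
  (qa q < 5) && (qb q < 5) && (qc q < 5) && (qd q < 5) &&
  (qa q != qb q) && (qc q != qd q) && (qa q != qc q) && (qa q != qd q) &&
  (qb q != qc q) && (qb q != qd q).

Lemma P2eq a b c d : a < 5 -> b < 5 -> c < 5 -> d < 5 -> a != b -> c != d ->
  (P2 a b == P2 c d) = eqP2N a b c d.
Proof. by move=> ha hb hc hd ab cd; rewrite /P2 eq2 ?inord_eq. Qed.

Lemma P2meet a b c d : a < 5 -> b < 5 -> c < 5 -> d < 5 ->
  (P2 a b :&: P2 c d != set0) = [|| a == c, a == d, b == c | b == d].
Proof. by move=> ha hb hc hd; rewrite /P2 meet2 ?inord_eq. Qed.

Lemma validP q : validq q ->
  [/\ qa q < 5, qb q < 5, qc q < 5, qd q < 5 &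
   [/\ qa q != qb q, qc q != qd q, P2 (qa q) (qb q) != P2 (qc q) (qd q) &
       ~~ [|| qa q == qc q, qa q == qd q, qb q == qc q | qb q == qd q]]].
Proof.
case: q => [[[a b] c] d]; rewrite /validq /qa /qb /qc /qd /=.
move=> /andP[/andP[/andP[/andP[/andP[/andP[/andP[/andP[/andP[ha hb] hc] hd] ab] cd] ac] ad] bc] bd].
split => //; split => //; last by rewrite (negbTE ac) (negbTE ad) (negbTE bc) (negbTE bd).
by rewrite P2eq // /eqP2N (negbTE ac) (negbTE ad).
Qed.

Lemma ESeq q r : validq q -> validq r -> (ES q == ES r) = eqESN q r.
Proof.
move=> /validP[ha hb hc hd [ab cd e _]] /validP[ha' hb' hc' hd' [ab' cd' e' _]].
by rewrite /ES eq2 // !P2eq.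
Qed.

Lemma ESmeet q r : validq q -> validq r -> (ES q :&: ES r != set0) = shareN q r.
Proof.
move=> /validP[ha hb hc hd [ab cd e _]] /validP[ha' hb' hc' hd' [ab' cd' e' _]].
by rewrite /ES meet2 !P2eq.
Qed.

Lemma ES_edge q : validq q -> pet_edge (ES q).
Proof.
move=> /validP[ha hb hc hd [ab cd e dj]].
apply/existsP; exists (P2 (qa q) (qb q)); apply/existsP; exists (P2 (qc q) (qd q)).
rewrite /pet_vertex /P2 !cards2 !inord_eq // ab cd /= eqxx andbT.
by rewrite -setI_eq0 -[_ == set0]negbK -/(P2 _ _) -/(P2 _ _) P2meet.
Qed.

Lemma validQ : all validq Q && validq q0.
Proof. vm_compute. reflexivity. Qed.

Lemma validQN n : validq (QN n).
Proof.
case/andP: validQ => /allP hQ h0; rewrite /QN.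
case: (ltnP n (size Q)) => h; first by apply: hQ; apply: mem_nth.
by rewrite nth_default.
Qed.

Definition fL (n : nat) : LV := exist (fun E => is_true (pet_edge E)) (ES (QN n)) (ES_edge (validQN n)).

Lemma fL_eq n m : (fL n == fL m) = eqESN (QN n) (QN m).
Proof. by rewrite -val_eqE /= ESeq //; apply: validQN. Qed.

Lemma injQ_chk : all (fun n => all (fun m => eqESN (QN n) (QN m) == (n == m)) I15) I15.
Proof. vm_compute. reflexivity. Qed.

Lemma fL_inj n m : n < 15 -> m < 15 -> (fL n == fL m) = (n == m).
Proof.
move=> hn hm; rewrite fL_eq.
by move: injQ_chk => /allP/(_ n (inI hn))/allP/(_ m (inI hm))/eqP.
Qed.

Definition I5 := iota 0 5.
Lemma surjQ_chk : all (fun a => all (fun b => all (fun c => all (fun d =>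
   validq (a, b, c, d) ==> has (fun n => eqESN (QN n) (a, b, c, d)) I15) I5) I5) I5) I5.
Proof. vm_compute. reflexivity. Qed.

Lemma fL_surj x : exists2 n, n < 15 & fL n = x.
Proof.
case: x => E pE.
have [q vq Eq] : exists2 q, validq q & E = ES q.
  case/existsP: (pE) => u /existsP[v /and4P[pu pv duv /eqP->]]; move: duv.
  case/cards2P: pu => i [j [ij ->]].
  case/cards2P: pv => k [l [kl ->]] duv.
  exists (val i, val j, val k, val l).
    move: duv; rewrite -setI_eq0 -[_ == set0]negbK meet2 /validq /qa /qb /qc /qd /=.
    rewrite !ltn_ord !val_eqE ij kl /=.
    by case: (i == k); case: (i == l); case: (j == k); case: (j == l).
  by rewrite /ES /P2 /qa /qb /qc /qd /= !inord_val.
move: surjQ_chk => /allP/(_ (qa q)) H.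
have := validP vq => -[ha hb hc hd _].
move: H => /(_ (inI ha))/allP/(_ (qb q) (inI hb))/allP/(_ (qc q) (inI hc))/allP/(_ (qd q) (inI hd)).
have -> : (qa q, qb q, qc q, qd q) = q by case: q {vq ha hb hc hd Eq} => [[[]]].
rewrite vq implyTb => /hasP[n /inI' hn eqn]; exists n => //.
apply: val_inj => /=; rewrite Eq; apply/eqP; rewrite ESeq //; exact: validQN.
Qed.

Lemma adj_f n m : adjL (fL n) (fL m) = adjN n m.
Proof. by rewrite /adjL fL_eq /= ESmeet //; apply: validQN. Qed.

Lemma reachN_S k x y : reachN k.+1 x y = reachN k x y || has (fun z => reachN k x z && adjN z y) I15.
Proof. by []. Qed.
Lemma reachL_S k x y : reachL k.+1 x y = reachL k x y || [exists z, reachL k x z && adjL z y].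
Proof. by []. Qed.
Lemma reach_f k n m : n < 15 -> m < 15 -> reachL k (fL n) (fL m) = reachN k n m.
Proof.
elim: k n m => [|k IH] n m hn hm; first by rewrite /= fL_inj.
rewrite reachN_S reachL_S IH //; congr (_ || _); apply/existsP/hasP.
- move=> [z]; case: (fL_surj z) => p hp <-; rewrite IH // adj_f => h.
  by exists p => //; apply: inI.
- move=> [p /inI' hp]; rewrite -IH // -adj_f => h; by exists (fL p).
Qed.

Lemma col_f n m : n < 15 -> m < 15 -> colL (fL n) (fL m) = colM n m.
Proof.
move=> hn hm; rewrite /colL /distL !reach_f //.
move: colM_ok => /allP/(_ n (inI hn))/allP/(_ m (inI hm)); rewrite ceqE => /eqP <-.
by [].
Qed.


Lemma min_rep (X : finType) (col : X -> X -> color) : representation col -> 15 <= #|X|.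
Proof.
case=> Hsym Hex Hman Hforb.
have M : forall h i j, mandN h i j -> forall x y, x != y -> col x y = h ->
    exists z, [/\ z != x, z != y, col x z = i & col z y = j].
  by move=> h i j; rewrite -mandE; apply: Hman.
have F : forall x y z, x != y -> y != z -> x != z -> ~~ forbN (col x y) (col y z) (col x z).
  by move=> x y z xy yz xz; rewrite -forbE; apply: Hforb.
have nbr : forall p : X, exists q, p != q.
  move=> p; case: (Hex ca) => x0 [y0 [xy _]].
  case: (eqVneq p x0) => [->|px]; [by exists y0 | by exists x0].
have hasC : forall p : X, exists q, p != q /\ col p q = cc.
  move=> p; case: (nbr p) => q pq; case E: (col p q).
  - by case: (M ca cc ca isT p q pq E) => z [zp _ c1 _]; exists z; rewrite eq_sym.
  - case: (M cb ca cb isT p q pq E) => z [zp _ c1 _].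
    have pz : p != z by rewrite eq_sym.
    by case: (M ca cc ca isT p z pz c1) => w [wp _ c2 _]; exists w; rewrite eq_sym.
  - by exists q.
have hasB : forall p : X, exists q, p != q /\ col p q = cb.
  move=> p; case: (hasC p) => q [pq E].
  case: (M cc ca ca isT p q pq E) => z [zp _ c1 _].
  have pz : p != z by rewrite eq_sym.
  by case: (M ca cb ca isT p z pz c1) => w [wp _ c2 _]; exists w; rewrite eq_sym.
pose Cls p := [set q | (q == p) || (col p q == cc)].
have cls3 : forall p : X, 3 <= #|Cls p|.
  move=> p; case: (hasC p) => q [pq E].
  case: (M cc cc cc isT p q pq E) => z [zp zq c1 _].
  have U : uniq [:: p; q; z] by rewrite /= !inE negb_or pq eq_sym zp eq_sym zq.
  rewrite -[3]/(size [:: p; q; z]) -(card_uniqP U).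
  apply: subset_leq_card; apply/subsetP => r; rewrite !inE.
  by case/or3P=> /eqP->; rewrite ?E ?c1 eqxx ?orbT.
have disj : forall p q : X, p != q -> col p q != cc -> [disjoint Cls p & Cls q].
  move=> p q pq cpq; rewrite -setI_eq0; apply/eqP/setP => r; rewrite !inE.
  have cqp : col q p != cc by rewrite -Hsym.
  apply/negbTE/negP; case/andP => /orP[/eqP E1|C1] /orP[/eqP E2|C2].
  - by move: pq; rewrite -E1 -E2 eqxx.
  - by move: C2 cqp; rewrite E1 => ->.
  - by move: C1 cpq; rewrite E2 => ->.
  - case: (eqVneq r p) => [E1|rp]; first by move: C2 cqp; rewrite E1 => ->.
    case: (eqVneq r q) => [E2|rq]; first by move: C1 cpq; rewrite E2 => ->.
    have := F p q r pq; rewrite eq_sym rq eq_sym rp => /(_ isT isT).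
    rewrite (eqP C1) (eqP C2).
    by case: (col p q) cpq => //; rewrite eqxx.
have cardU : forall A B : {set X}, [disjoint A & B] -> #|A :|: B| = #|A| + #|B|.
  by move=> A B; rewrite -setI_eq0 cardsU => /eqP->; rewrite cards0 subn0.
have disjU' : forall A B C : {set X}, [disjoint A :|: B & C] = [disjoint A & C] && [disjoint B & C].
  by move=> A B C; rewrite -!setI_eq0 setIUl setU_eq0.
have ncb : forall x p q : X, p != q -> x != p -> x != q -> col x p = cb -> col x q = cb -> col p q != cc.
  move=> x p q pq xp xq E1 E2; apply/eqP => E.
  by have := F x p q xp pq xq; rewrite E1 E E2.
have final : forall x y1 y2 y3 y4 : X,
    col x y1 = cb -> col x y2 = cb -> col x y3 = cb -> col x y4 = cb ->
    uniq [:: x; y1; y2; y3; y4] -> 15 <= #|X|.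
  move=> x y1 y2 y3 y4 c1 c2 c3 c4.
  rewrite /= !inE !negb_or => /and5P[/and4P[x1 x2 x3 x4] /and3P[a12 a13 a14] /andP[a23 a24] a34 _].
  have dx : forall y, x != y -> col x y = cb -> [disjoint Cls x & Cls y].
    by move=> y xy cy; apply: disj => //; rewrite cy -ceqE.
  have D12 := disj _ _ a12 (ncb _ _ _ a12 x1 x2 c1 c2).
  have D13 := disj _ _ a13 (ncb _ _ _ a13 x1 x3 c1 c3).
  have D14 := disj _ _ a14 (ncb _ _ _ a14 x1 x4 c1 c4).
  have D23 := disj _ _ a23 (ncb _ _ _ a23 x2 x3 c2 c3).
  have D24 := disj _ _ a24 (ncb _ _ _ a24 x2 x4 c2 c4).
  have D34 := disj _ _ a34 (ncb _ _ _ a34 x3 x4 c3 c4).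
  have Dx1 := dx y1 x1 c1; have Dx2 := dx y2 x2 c2; have Dx3 := dx y3 x3 c3; have Dx4 := dx y4 x4 c4.
  have := max_card (mem (Cls x :|: Cls y1 :|: Cls y2 :|: Cls y3 :|: Cls y4)).
  rewrite cardU; [|by rewrite ?disjU' ?Dx1 ?Dx2 ?Dx3 ?Dx4 ?D12 ?D13 ?D14 ?D23 ?D24 ?D34].
  rewrite cardU; [|by rewrite ?disjU' ?Dx1 ?Dx2 ?Dx3 ?Dx4 ?D12 ?D13 ?D14 ?D23 ?D24 ?D34].
  rewrite cardU; [|by rewrite ?disjU' ?Dx1 ?Dx2 ?Dx3 ?Dx4 ?D12 ?D13 ?D14 ?D23 ?D24 ?D34].
  rewrite cardU; [|by rewrite ?disjU' ?Dx1 ?Dx2 ?Dx3 ?Dx4 ?D12 ?D13 ?D14 ?D23 ?D24 ?D34].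
  move=> H; apply: leq_trans H.
  have := cls3 x; have := cls3 y1; have := cls3 y2; have := cls3 y3; have := cls3 y4.
  move=> h4 h3 h2 h1 h0.
  by apply: leq_trans (leq_add (leq_add (leq_add (leq_add h0 h1) h2) h3) h4).
case: (Hex ca) => x [_ [_ _]].
case: (hasB x) => y1 [xy1 c1].
case: (M cb cb cb isT x y1 xy1 c1) => y2 [y2x y2y1 c2 c21].
case: (M cb cb ca isT x y1 xy1 c1) => y3 [y3x y3y1 c3 c31].
have y23 : y2 != y3.
  by apply/eqP => E; move: c21; rewrite E c31 => H; discriminate H.
have xy2 : x != y2 by rewrite eq_sym.
have xy3 : x != y3 by rewrite eq_sym.
have y12 : y1 != y2 by rewrite eq_sym.
have y13 : y1 != y3 by rewrite eq_sym.
have c12 : col y1 y2 = cb by rewrite Hsym.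
have c13 : col y1 y3 = ca by rewrite Hsym.
case: (M cb cb cb isT x y3 xy3 c3) => z [zx zy3 cz czy3].
case: (eqVneq z y2) => [Ez|zy2].
- rewrite Ez in czy3.
  case: (M cb cb ca isT x y2 xy2 c2) => y4 [y4x y4y2 c4 c42].
  have c32 : col y3 y2 = cb by rewrite Hsym // eq_sym.
  have y14 : y1 != y4 by apply/eqP => E; move: c42; rewrite -E c12 => H; discriminate H.
  have y34 : y3 != y4 by apply/eqP => E; move: c42; rewrite -E c32 => H; discriminate H.
  have xy4 : x != y4 by rewrite eq_sym.
  have y24 : y2 != y4 by rewrite eq_sym.
  apply: (final x y1 y2 y3 y4 c1 c2 c3 c4).
  by rewrite /= !inE !negb_or xy1 xy2 xy3 xy4 y12 y13 y14 y23 y24 y34.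
- have y1z : y1 != z by apply/eqP => E; move: czy3; rewrite -E c13 => H; discriminate H.
  have xz : x != z by rewrite eq_sym.
  have y2z : y2 != z by rewrite eq_sym.
  have y3z : y3 != z by rewrite eq_sym.
  apply: (final x y1 y2 y3 z c1 c2 c3 cz).
  by rewrite /= !inE !negb_or xy1 xy2 xy3 xz y12 y13 y1z y23 y2z y3z.
Qed.

Lemma dist_f k n m : n < 15 -> m < 15 -> distL k (fL n) (fL m) = distN k n m.
Proof. by move=> hn hm; rewrite /distL /distN !reach_f. Qed.

Theorem mainTheorem11 :
  [/\ #|{: LV}| = 15,
      (forall x y : LV, x != y -> [|| distL 1 x y, distL 2 x y | distL 3 x y]),
      representation colL &
      (forall (X : finType) (col : X -> X -> color),
          representation col -> 15 <= #|X|)].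
Proof.
split.
- pose lst := map fL I15.
  have Hu : uniq lst.
    rewrite map_inj_in_uniq ?iota_uniq // => n m /inI' hn /inI' hm /eqP.
    by rewrite fL_inj // => /eqP.
  have Hm : forall x, x \in lst.
    by move=> x; case: (fL_surj x) => n hn <-; apply: map_f; apply: inI.
  have -> : #|{: LV}| = #|lst| by apply: eq_card => x; rewrite Hm.
  by rewrite (card_uniqP Hu) size_map size_iota.
- move=> x y; case: (fL_surj x) => n hn <-; case: (fL_surj y) => m hm <-.
  rewrite fL_inj // => nm; rewrite !dist_f //.
  by move: distM => /allP/(_ n (inI hn))/allP/(_ m (inI hm)); rewrite nm.
- exact: (transfer fL_surj fL_inj col_f repM).
- exact: min_rep.
Qed.
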